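(* Let $a>0$, $b>0$, and let $\chi_1,\chi_2\ge0$, $\lambda_1,\lambda_2>0$, $\mu_1,\mu_2>0$ be arbitrary. Then the system $$\begin{cases}\partial_t u=\partial_{xx}u+\partial_x\big(u\,\partial_x(\chi_2 v_2-\chi_1 v_1)\big)+u(a-bu), & x\in\mathbb{R},\\ 0=\partial_{xx}v_1-\lambda_1 v_1+\mu_1 u, & x\in\mathbb{R},\\ 0=\partial_{xx}v_2-\lambda_2 v_2+\mu_2 u, & x\in\mathbb{R}\end{cases}$$ has no traveling wave solution $(u,v_1,v_2)=(U(x-ct),V_1(x-ct),V_2(x-ct))$ with $(U,V_1,V_2)(-\infty)=(\frac ab,\frac{a\mu_1}{b\lambda_1},\frac{a\mu_2}{b\lambda_2})$, $(U,V_1,V_2)(\infty)=(0,0,0)$ and $c<2\sqrt a$.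
   Context: A traveling wave solution here is a nonnegative classical solution of the stated form with the stated limits as the argument tends to $\mp\infty$. *)

(* Defs.v *)
From Stdlib Require Import Reals.
From Coquelicot Require Import Coquelicot.
Open Scope R_scope.

Definition dt (w : R -> R -> R) (t x : R) : R := Derive (fun s => w s x) t.
Definition dx (w : R -> R -> R) (t x : R) : R := Derive (fun y => w t y) x.
Definition dxx (w : R -> R -> R) (t x : R) : R := Derive (fun y => dx w t y) x.

Definition C2x (w : R -> R -> R) : Prop :=
  forall t x,
    ex_derive (fun y => w t y) x /\
    ex_derive (fun y => dx w t y) x /\
    continuous (fun y => dxx w t y) x.

Definition C1t (w : R -> R -> R) : Prop :=
  forall t x,
    ex_derive (fun s => w s x) t /\
    continuous (fun s => dt w s x) t.

Definition classical_solution (a b chi1 chi2 lam1 lam2 mu1 mu2 : R)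
  (u v1 v2 : R -> R -> R) : Prop :=
  C1t u /\ C2x u /\ C2x v1 /\ C2x v2 /\
  forall t x,
    let flux := fun y => u t y * dx (fun s z => chi2 * v2 s z - chi1 * v1 s z) t y in
    ex_derive flux x /\
    dt u t x = dxx u t x + Derive flux x + u t x * (a - b * u t x) /\
    0 = dxx v1 t x - lam1 * v1 t x + mu1 * u t x /\
    0 = dxx v2 t x - lam2 * v2 t x + mu2 * u t x.

Definition traveling_wave (a b chi1 chi2 lam1 lam2 mu1 mu2 c : R)
  (U V1 V2 : R -> R) : Prop :=
  (forall z, 0 <= U z /\ 0 <= V1 z /\ 0 <= V2 z) /\
  classical_solution a b chi1 chi2 lam1 lam2 mu1 mu2
    (fun t x => U (x - c * t)) (fun t x => V1 (x - c * t))
    (fun t x => V2 (x - c * t)) /\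
  is_lim U m_infty (a / b) /\
  is_lim V1 m_infty (a * mu1 / (b * lam1)) /\
  is_lim V2 m_infty (a * mu2 / (b * lam2)) /\
  is_lim U p_infty 0 /\ is_lim V1 p_infty 0 /\ is_lim V2 p_infty 0.

(* Main.v *)
Require Import Defs.
From Stdlib Require Import Reals Lra Psatz FunctionalExtensionality.
From Coquelicot Require Import Coquelicot.
Open Scope R_scope.

Lemma dpl_cont f x l : derivable_pt_lim f x l -> continuity_pt f x.
Proof. intro H. apply derivable_continuous_pt. exists l. exact H. Qed.

Lemma dpl_val f x l l' : derivable_pt_lim f x l -> l = l' -> derivable_pt_lim f x l'.
Proof. intros H ->; exact H. Qed.

Lemma upper_mvt f f' x y k : x <= y ->
  (forall z, x <= z <= y -> derivable_pt_lim f z (f' z)) ->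
  (forall z, x <= z <= y -> f' z <= k) -> f y <= f x + k * (y - x).
Proof.
  intros Hxy Hd Hk. destruct (Req_dec x y) as [<-|Hne]. lra.
  destruct (MVT_cor2 f f' x y) as [z [Hz Hz2]]. lra. exact Hd.
  assert (f' z <= k) by (apply Hk; lra).
  assert (f' z * (y - x) <= k * (y - x)) by (apply Rmult_le_compat_r; lra). lra.
Qed.

Lemma lower_mvt f f' x y k : x <= y ->
  (forall z, x <= z <= y -> derivable_pt_lim f z (f' z)) ->
  (forall z, x <= z <= y -> k <= f' z) -> f x + k * (y - x) <= f y.
Proof.
  intros Hxy Hd Hk. destruct (Req_dec x y) as [<-|Hne]. lra.
  destruct (MVT_cor2 f f' x y) as [z [Hz Hz2]]. lra. exact Hd.
  assert (k <= f' z) by (apply Hk; lra).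
  assert (k * (y - x) <= f' z * (y - x)) by (apply Rmult_le_compat_r; lra). lra.
Qed.

Lemma stay_below f f' z0 z : z0 <= z ->
  (forall y, z0 <= y -> derivable_pt_lim f y (f' y)) ->
  (forall y, z0 <= y -> f y <= 0 -> f' y < 0) -> f z0 <= 0 -> f z <= f z0.
Proof.
  intros Hz Hd Hneg H0.
  destruct (continuity_ab_min f z0 z Hz) as [m [Hm Hmr]].
  { intros y Hy. apply (dpl_cont f y (f' y)). apply Hd; lra. }
  assert (Hfm : f m <= f z0) by (apply Hm; lra).
  destruct (Req_dec m z) as [<-|Hne]. exact Hfm.
  exfalso.
  assert (Hl : f' m < 0) by (apply Hneg; lra).
  pose proof (Hd m (proj1 Hmr)) as Hdm.
  destruct (Hdm (- f' m / 2)) as [d Hdd]. lra.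
  set (h := Rmin (d / 2) ((z - m) / 2)).
  assert (Hh0 : 0 < h). { unfold h. apply Rmin_glb_lt. destruct d; simpl; lra. lra. }
  assert (Hh1 : h <= (z - m) / 2) by apply Rmin_r.
  assert (Hh2 : h <= d / 2) by apply Rmin_l.
  specialize (Hdd h).
  assert (Habs : Rabs ((f (m + h) - f m) / h - f' m) < - f' m / 2).
  { apply Hdd. lra. rewrite Rabs_right by lra. destruct d; simpl in *; lra. }
  assert (Hmh : f m <= f (m + h)) by (apply Hm; lra).
  assert (0 <= (f (m + h) - f m) / h).
  { apply Rmult_le_pos. lra. left; apply Rinv_0_lt_compat; lra. }
  apply Rabs_def2 in Habs. lra.
Qed.

Lemma bound_compact f lo hi : lo <= hi -> (forall y, continuity_pt f y) ->
  exists K, 0 <= K /\ forall y, lo <= y <= hi -> Rabs (f y) <= K.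
Proof.
  intros Hlh Hc.
  destruct (continuity_ab_maj (fun y => Rabs (f y)) lo hi Hlh) as [M [HM _]].
  { intros y _. apply (continuity_pt_comp f Rabs). apply Hc. apply Rcontinuity_abs. }
  exists (Rabs (f M)). split. apply Rabs_pos. exact HM.
Qed.

Lemma dpl_expk k y : derivable_pt_lim (fun y => exp (k * y)) y (exp (k * y) * k).
Proof.
  apply (derivable_pt_lim_comp (fun y => k * y) exp y k (exp (k * y))).
  apply dpl_val with (k * 1). apply derivable_pt_lim_scal, derivable_pt_lim_id. ring.
  apply derivable_pt_lim_exp.
Qed.

Lemma gronwall_zero E E' K lo hi z0 z : 0 <= K ->
  (forall y, derivable_pt_lim E y (E' y)) ->
  (forall y, lo <= y <= hi -> Rabs (E' y) <= K * E y) ->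
  (forall y, 0 <= E y) -> lo <= z0 <= hi -> lo <= z <= hi -> E z0 = 0 -> E z = 0.
Proof.
  intros HK Hd Hb Hpos Hz0 Hz HE0.
  destruct (Rle_or_lt z0 z) as [Hle|Hlt].
  - set (F := fun y => E y * exp (- K * y)).
    assert (HF : F z <= F z0 + 0 * (z - z0)).
    { apply (upper_mvt F (fun y => E' y * exp (- K * y) + E y * (exp (- K * y) * (- K)))).
      exact Hle.
      intros y _. unfold F. apply (derivable_pt_lim_mult E (fun y => exp (- K * y))). apply Hd.
      apply (dpl_expk (- K)).
      intros y Hy. assert (Hy' : lo <= y <= hi) by lra. specialize (Hb y Hy').
      apply Rabs_le_between in Hb. pose proof (exp_pos (- K * y)).
      assert ((E' y - K * E y) * exp (- K * y) <= 0). apply Rmult_le_0_r; lra. nra. }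
    unfold F in HF. rewrite HE0 in HF. pose proof (exp_pos (- K * z)). pose proof (Hpos z).
    assert (E z * exp (-K * z) <= 0) by lra. nra.
  - set (F := fun y => E y * exp (K * y)).
    assert (HF : F z + 0 * (z0 - z) <= F z0).
    { apply (lower_mvt F (fun y => E' y * exp (K * y) + E y * (exp (K * y) * K))).
      lra.
      intros y _. unfold F. apply (derivable_pt_lim_mult E (fun y => exp (K * y))). apply Hd.
      apply (dpl_expk (K)).
      intros y Hy. assert (Hy' : lo <= y <= hi) by lra. specialize (Hb y Hy').
      apply Rabs_le_between in Hb. pose proof (exp_pos (K * y)).
      assert (0 <= (E' y + K * E y) * exp (K * y)). apply Rmult_le_pos; lra. nra. }
    unfold F in HF. rewrite HE0 in HF. pose proof (exp_pos (K * z)). pose proof (Hpos z).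
    assert (E z * exp (K * z) <= 0) by lra. nra.
Qed.

Lemma interp V V1 V2 :
  (forall y, derivable_pt_lim V y (V1 y)) ->
  (forall y, derivable_pt_lim V1 y (V2 y)) ->
  (forall e, 0 < e -> exists M, forall y, M < y -> Rabs (V y) < e) ->
  (forall e, 0 < e -> exists M, forall y, M < y -> Rabs (V2 y) < e) ->
  forall e, 0 < e -> exists M, forall y, M < y -> Rabs (V1 y) <= e.
Proof.
  intros d1 d2 L0 L2 e He.
  destruct (L0 (e / 3)) as [M0 H0]. lra.
  destruct (L2 (e / 3)) as [M2 H2]. lra.
  exists (Rmax M0 M2). intros y Hy.
  assert (HM0 : M0 < y) by (eapply Rle_lt_trans; [apply Rmax_l|exact Hy]).
  assert (HM2 : M2 < y) by (eapply Rle_lt_trans; [apply Rmax_r|exact Hy]).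
  destruct (MVT_cor2 V V1 y (y + 1)) as [xi [Hxi Hxi2]]. lra. intros; apply d1.
  assert (A1 : Rabs (V (y + 1)) < e / 3) by (apply H0; lra).
  assert (A2 : Rabs (V y) < e / 3) by (apply H0; lra).
  apply Rabs_def2 in A1. apply Rabs_def2 in A2.
  replace (y + 1 - y) with 1 in Hxi by ring.
  destruct (MVT_cor2 V1 V2 y xi) as [eta [Heta Heta2]]. lra. intros; apply d2.
  assert (A3 : Rabs (V2 eta) < e / 3) by (apply H2; lra).
  apply Rabs_def2 in A3.
  assert (Hb : Rabs (V2 eta * (xi - y)) <= e / 3).
  { rewrite Rabs_mult. rewrite (Rabs_right (xi - y)) by lra.
    assert (Rabs (V2 eta) <= e/3) by (apply Rabs_le; lra).
    assert (Rabs (V2 eta) * (xi - y) <= e/3 * 1).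
    apply Rmult_le_compat; try lra. apply Rabs_pos. lra. }
  apply Rabs_le_between in Hb. apply Rabs_le. lra.
Qed.

Lemma quad_pos c a : 0 < a -> c < 2 * sqrt a ->
  exists k, 0 < k /\ forall w, w <= 0 -> k * (1 + w * w) <= w * w + c * w + a.
Proof.
  intros Ha Hc.
  destruct (Rle_or_lt c 0) as [Hc0|Hc0].
  - exists (a / (1 + a)). split. apply Rdiv_lt_0_compat; lra.
    intros w Hw. assert (0 <= c * w) by nra.
    apply Rmult_le_reg_r with (1 + a). lra.
    unfold Rdiv. rewrite Rmult_assoc. field_simplify. nra. lra.
  - assert (Hs : sqrt a * sqrt a = a) by (apply sqrt_sqrt; lra).
    assert (Hsp : 0 < sqrt a) by (apply sqrt_lt_R0; lra).
    assert (Hc2 : c * c < 4 * a) by nra.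
    set (k := (4 * a - c * c) / (8 * (1 + a))).
    assert (Hk : 0 < k) by (unfold k; apply Rdiv_lt_0_compat; lra).
    assert (Hk2 : k * (8 * (1 + a)) = 4 * a - c * c) by (unfold k; field; lra).
    exists k. split. exact Hk. intros w _.
    assert (Hk1 : k < 1/2) by nra.
    assert (Hka : 4 * (1 - k) * (a - k) >= c * c) by nra.
    assert (E : 4 * (1 - k) * (w * w + c * w + a - k * (1 + w * w)) =
               (2 * (1 - k) * w + c) ^ 2 + (4 * (1 - k) * (a - k) - c * c)) by ring.
    assert (0 <= (2 * (1 - k) * w + c) ^ 2) by (apply pow2_ge_0).
    nra.
Qed.

Definition tends (h : R -> R) := forall e, 0 < e -> exists M, forall y, M < y -> Rabs (h y) < e.

Lemma limp f l : is_lim f p_infty (Finite l) -> tends (fun y => f y - l).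
Proof.
  intros H e He. apply is_lim_spec in H. destruct (H (mkposreal e He)) as [M HM].
  exists M. intros y Hy. exact (HM y Hy).
Qed.

Lemma limm f l : is_lim f m_infty (Finite l) -> forall e, 0 < e -> exists M, forall y, y < M -> Rabs (f y - l) < e.
Proof.
  intros H e He. apply is_lim_spec in H. destruct (H (mkposreal e He)) as [M HM].
  exists M. intros y Hy. exact (HM y Hy).
Qed.

Lemma tends_lin f g al be : tends f -> tends g -> tends (fun y => al * f y + be * g y).
Proof.
  intros Hf Hg e He.
  set (e' := e / (1 + Rabs al + Rabs be)).
  assert (Hd : 0 < 1 + Rabs al + Rabs be) by (pose proof (Rabs_pos al); pose proof (Rabs_pos be); lra).
  assert (He' : 0 < e') by (unfold e'; apply Rdiv_lt_0_compat; lra).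
  destruct (Hf e' He') as [M1 H1]. destruct (Hg e' He') as [M2 H2].
  exists (Rmax M1 M2). intros y Hy.
  assert (A1 : Rabs (f y) < e') by (apply H1; eapply Rle_lt_trans; [apply Rmax_l|exact Hy]).
  assert (A2 : Rabs (g y) < e') by (apply H2; eapply Rle_lt_trans; [apply Rmax_r|exact Hy]).
  eapply Rle_lt_trans. apply Rabs_triang. rewrite !Rabs_mult.
  assert (Rabs al * Rabs (f y) <= Rabs al * e') by (apply Rmult_le_compat_l; [apply Rabs_pos|lra]).
  assert (Rabs be * Rabs (g y) <= Rabs be * e') by (apply Rmult_le_compat_l; [apply Rabs_pos|lra]).
  assert (e' * (1 + Rabs al + Rabs be) = e) by (unfold e'; field; lra).
  nra.
Qed.

Lemma tends_ext f g : (forall y, f y = g y) -> tends f -> tends g.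
Proof. intros E H e He. destruct (H e He) as [M HM]. exists M. intros y Hy. rewrite <- E. auto. Qed.

Lemma interp' V V1 V2 :
  (forall y, derivable_pt_lim V y (V1 y)) ->
  (forall y, derivable_pt_lim V1 y (V2 y)) ->
  tends V -> tends V2 -> tends V1.
Proof.
  intros d1 d2 L0 L2 e He. destruct (interp V V1 V2 d1 d2 L0 L2 (e/2)) as [M HM]. lra.
  exists M. intros y Hy. specialize (HM y Hy). lra.
Qed.

Lemma pert k0 p q c a w : 0 < k0 -> Rabs (p - c) < k0 / 4 -> Rabs (q - a) < k0 / 4 -> w <= 0 ->
  k0 * (1 + w * w) <= w * w + c * w + a -> k0 / 2 * (1 + w * w) <= w * w + p * w + q.
Proof.
  intros Hk Hp Hq Hw H. apply Rabs_def2 in Hp. apply Rabs_def2 in Hq.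
  assert (A : (k0 / 4) * w <= (p - c) * w) by nra.
  assert (B : - (1 + w * w) <= w) by nra.
  nra.
Qed.

Lemma ebound u v p q P Q : Rabs p <= P -> Rabs q <= Q ->
  Rabs (2 * u * v * (1 - q) - 2 * p * v * v) <= (1 + Q + 2 * P) * (u * u + v * v).
Proof.
  intros Hp Hq. eapply Rle_trans. apply Rabs_triang. rewrite Rabs_Ropp.
  assert (H1 : Rabs (2 * u * v) <= u * u + v * v).
  { pose proof (pow2_ge_0 (u + v)); pose proof (pow2_ge_0 (u - v)). apply Rabs_le. split; nra. }
  assert (H2 : Rabs (1 - q) <= 1 + Q).
  { eapply Rle_trans. apply Rabs_triang. rewrite Rabs_Ropp, Rabs_R1. lra. }
  replace (2 * u * v * (1 - q)) with ((2 * u * v) * (1 - q)) by ring.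
  replace (2 * p * v * v) with (p * (2 * (v * v))) by ring.
  rewrite (Rabs_mult p), (Rabs_right (2 * (v * v))) by nra. rewrite Rabs_mult.
  assert (Rabs (2 * u * v) * Rabs (1 - q) <= (u * u + v * v) * (1 + Q)).
  { apply Rmult_le_compat; auto using Rabs_pos. }
  assert (Rabs p * (2 * (v * v)) <= P * (2 * (v * v))).
  { apply Rmult_le_compat_r; nra. }
  assert (0 <= P) by (eapply Rle_trans; [apply Rabs_pos|exact Hp]).
  nra.
Qed.

Lemma E0 c (f : R -> R) : (fun y => f (y - c * 0)) = f.
Proof. apply functional_extensionality; intro y. f_equal. ring. Qed.

Lemma Dcorr f y : ex_derive f y -> derivable_pt_lim f y (Derive f y).
Proof. intro H. apply is_derive_Reals. apply Derive_correct. exact H. Qed.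

Lemma Dval f x l : derivable_pt_lim f x l -> Derive f x = l.
Proof. intro H. apply is_derive_unique. apply is_derive_Reals. exact H. Qed.

Lemma E1 c k1 k2 (f g : R -> R) :
  (fun y => k1 * f (y - c * 0) - k2 * g (y - c * 0)) = (fun y => k1 * f y - k2 * g y).
Proof. apply functional_extensionality; intro y. replace (y - c * 0) with y by ring. reflexivity. Qed.

Lemma exd_cont f y : ex_derive f y -> continuity_pt f y.
Proof. intro H. apply derivable_continuous_pt. apply ex_derive_Reals_0. exact H. Qed.

Theorem theoremC (a b chi1 chi2 lam1 lam2 mu1 mu2 : R) :
  0 < a -> 0 < b -> 0 <= chi1 -> 0 <= chi2 ->
  0 < lam1 -> 0 < lam2 -> 0 < mu1 -> 0 < mu2 ->
  ~ (exists (c : R) (U V1 V2 : R -> R),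
        c < 2 * sqrt a /\
        traveling_wave a b chi1 chi2 lam1 lam2 mu1 mu2 c U V1 V2).
Proof.
  intros Ha Hb Hc1 Hc2 Hl1 Hl2 Hm1 Hm2 [c [U [V1 [V2 [Hc [Hnn [Hsol [LUm [_ [_ [LU [LV1 LV2]]]]]]]]]]]].
  destruct Hsol as [_ [C2U [C2V1 [C2V2 Heqs]]]].
  assert (X : forall (F : R -> R), C2x (fun t x => F (x - c * t)) ->
     forall y, ex_derive F y /\ ex_derive (Derive F) y).
  { intros F HF y. destruct (HF 0 y) as [A [B _]]. unfold dx in B. cbv beta in A, B.
    rewrite E0 in A, B. split; assumption. }
  set (U1 := Derive U). set (U2 := Derive U1).
  set (P1 := Derive V1). set (P2 := Derive P1).
  set (Q1 := Derive V2). set (Q2 := Derive Q1).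
  assert (dU : forall y, derivable_pt_lim U y (U1 y)) by (intro y; apply Dcorr, (X U C2U)).
  assert (dU1 : forall y, derivable_pt_lim U1 y (U2 y)) by (intro y; apply Dcorr, (X U C2U)).
  assert (dV1 : forall y, derivable_pt_lim V1 y (P1 y)) by (intro y; apply Dcorr, (X V1 C2V1)).
  assert (dP1 : forall y, derivable_pt_lim P1 y (P2 y)) by (intro y; apply Dcorr, (X V1 C2V1)).
  assert (dV2 : forall y, derivable_pt_lim V2 y (Q1 y)) by (intro y; apply Dcorr, (X V2 C2V2)).
  assert (dQ1 : forall y, derivable_pt_lim Q1 y (Q2 y)) by (intro y; apply Dcorr, (X V2 C2V2)).
  assert (Heq : forall x, 
     P2 x = lam1 * V1 x - mu1 * U x /\ Q2 x = lam2 * V2 x - mu2 * U x /\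
     - c * U1 x = U2 x + (U1 x * (chi2 * Q1 x - chi1 * P1 x) + U x * (chi2 * Q2 x - chi1 * P2 x))
        + U x * (a - b * U x)).
  { intro x. destruct (Heqs 0 x) as [_ [Eu [Ev1 Ev2]]]. cbv beta zeta in Eu, Ev1, Ev2.
    unfold dt, dxx, dx in Eu, Ev1, Ev2. rewrite !E0 in Ev1, Ev2.
    rewrite E0, E1 in Eu. replace (x - c * 0) with x in * by ring.
    change (Derive (fun y => Derive V1 y) x) with (P2 x) in Ev1.
    change (Derive (fun y => Derive V2 y) x) with (Q2 x) in Ev2.
    change (Derive (fun y => Derive U y) x) with (U2 x) in Eu.
    rewrite (Derive_ext (fun y => U (y - c * 0) * Derive (fun y0 => chi2 * V2 y0 - chi1 * V1 y0) y) (fun y => U y * (chi2 * Q1 y - chi1 * P1 y))) in Eu.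
    2:{ intro t. replace (t - c * 0) with t by ring. f_equal.
        apply Dval. apply derivable_pt_lim_minus; apply derivable_pt_lim_scal; auto. }
    rewrite (Dval _ x (U1 x * (chi2 * Q1 x - chi1 * P1 x) + U x * (chi2 * Q2 x - chi1 * P2 x))) in Eu.
    2:{ apply (derivable_pt_lim_mult U (fun y => chi2 * Q1 y - chi1 * P1 y)). auto.
        apply (derivable_pt_lim_minus (fun y => chi2 * Q1 y) (fun y => chi1 * P1 y));
        apply derivable_pt_lim_scal; auto. }
    rewrite (Dval _ 0 (U1 x * (- c))) in Eu.
    2:{ apply (derivable_pt_lim_comp (fun s => x - c * s) U 0 (-c)).
        apply dpl_val with (0 - c * 1). apply derivable_pt_lim_minus.
        apply derivable_pt_lim_const. apply derivable_pt_lim_scal, derivable_pt_lim_id. ring.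
        replace (x - c * 0) with x by ring. auto. }
    split. lra. split. lra. lra. }
  set (p := fun y => c + (chi2 * Q1 y - chi1 * P1 y)).
  set (q := fun y => chi2 * (lam2 * V2 y - mu2 * U y) - chi1 * (lam1 * V1 y - mu1 * U y) + a - b * U y).
  assert (eqU : forall y, U2 y = - p y * U1 y - q y * U y).
  { intro y. destruct (Heq y) as [A [B C]]. unfold p, q. rewrite A, B in C. lra. }
  assert (exU : forall y, ex_derive U y) by (intro y; apply (X U C2U)).
  assert (exV1 : forall y, ex_derive V1 y) by (intro y; apply (X V1 C2V1)).
  assert (exV2 : forall y, ex_derive V2 y) by (intro y; apply (X V2 C2V2)).
  assert (exP1 : forall y, ex_derive P1 y) by (intro y; apply (X V1 C2V1)).
  assert (exQ1 : forall y, ex_derive Q1 y) by (intro y; apply (X V2 C2V2)).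
  assert (cp : forall y, continuity_pt p y).
  { intro y. apply exd_cont. unfold p. auto_derive. repeat split; auto. }
  assert (cq : forall y, continuity_pt q y).
  { intro y. apply exd_cont. unfold q. auto_derive. repeat split; auto. }
  assert (Upos : forall y, 0 < U y).
  { intro z2. destruct (Rle_or_lt (U z2) 0) as [Hz|Hz]; [exfalso|exact Hz].
    assert (Uz : U z2 = 0) by (pose proof (proj1 (Hnn z2)); lra).
    assert (U1z : U1 z2 = 0).
    { pose proof (deriv_minimum U (z2 - 1) (z2 + 1) z2 (ex_derive_Reals_0 U z2 (exU z2))) as D.
      rewrite Derive_Reals in D. apply D. lra. lra. intros. rewrite Uz. apply Hnn. }
    destruct (limm U (a / b) LUm (a / b / 2)) as [M HM].
    { apply Rdiv_lt_0_compat. apply Rdiv_lt_0_compat; lra. lra. }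
    set (al := M - 1).
    assert (Ual : 0 < U al).
    { specialize (HM al ltac:(unfold al; lra)). apply Rabs_def2 in HM.
      assert (0 < a / b) by (apply Rdiv_lt_0_compat; lra). lra. }
    set (lo := Rmin al z2). set (hi := Rmax al z2).
    assert (Hlh : lo <= hi) by (unfold lo, hi; eapply Rle_trans; [apply Rmin_l|apply Rmax_l]).
    destruct (bound_compact p lo hi Hlh cp) as [Pb [HPb HPb2]].
    destruct (bound_compact q lo hi Hlh cq) as [Qb [HQb HQb2]].
    set (E := fun y => U y * U y + U1 y * U1 y).
    set (E' := fun y => U1 y * U y + U y * U1 y + (U2 y * U1 y + U1 y * U2 y)).
    assert (HE : E al = 0).
    { apply (gronwall_zero E E' (1 + Qb + 2 * Pb) lo hi z2 al). lra.
      - intro y. unfold E, E'. apply (derivable_pt_lim_plus (fun y => U y * U y) (fun y => U1 y * U1 y)).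
        apply (derivable_pt_lim_mult U U); auto. apply (derivable_pt_lim_mult U1 U1); auto.
      - intros y Hy. unfold E, E'. rewrite eqU.
        replace (U1 y * U y + U y * U1 y + ((- p y * U1 y - q y * U y) * U1 y + U1 y * (- p y * U1 y - q y * U y)))
          with (2 * U y * U1 y * (1 - q y) - 2 * p y * U1 y * U1 y) by ring.
        apply ebound; auto.
      - intro y. unfold E. nra.
      - unfold lo, hi. split. apply Rmin_r. apply Rmax_r.
      - unfold lo, hi. split. apply Rmin_l. apply Rmax_l.
      - unfold E. rewrite Uz, U1z. ring. }
    unfold E in HE. nra. }
  assert (tU : tends U) by (apply (tends_ext (fun y => U y - 0)); [intro; ring | apply limp; exact LU]).
  assert (tV1 : tends V1) by (apply (tends_ext (fun y => V1 y - 0)); [intro; ring | apply limp; exact LV1]).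
  assert (tV2 : tends V2) by (apply (tends_ext (fun y => V2 y - 0)); [intro; ring | apply limp; exact LV2]).
  assert (tP2 : tends P2).
  { apply (tends_ext (fun y => lam1 * V1 y + (- mu1) * U y)).
    intro y. destruct (Heq y) as [A _]. rewrite A. ring. apply tends_lin; auto. }
  assert (tQ2 : tends Q2).
  { apply (tends_ext (fun y => lam2 * V2 y + (- mu2) * U y)).
    intro y. destruct (Heq y) as [_ [A _]]. rewrite A. ring. apply tends_lin; auto. }
  assert (tP1 : tends P1) by (apply (interp' V1 P1 P2); auto).
  assert (tQ1 : tends Q1) by (apply (interp' V2 Q1 Q2); auto).
  assert (tp : tends (fun y => p y - c)).
  { apply (tends_ext (fun y => chi2 * Q1 y + (- chi1) * P1 y)).
    intro y. unfold p. ring. apply tends_lin; auto. }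
  assert (tq : tends (fun y => q y - a)).
  { apply (tends_ext (fun y => 1 * (chi2 * lam2 * V2 y + (- chi1 * lam1) * V1 y)
                               + (chi1 * mu1 - chi2 * mu2 - b) * U y)).
    intro y. unfold q. ring. apply tends_lin; auto. apply tends_lin; auto. }
  destruct (quad_pos c a Ha Hc) as [k0 [Hk0 Hquad]].
  destruct (tp (k0 / 4)) as [Mp HMp]. lra.
  destruct (tq (k0 / 4)) as [Mq HMq]. lra.
  set (z1 := Rmax Mp Mq + 1).
  assert (G : forall y w, z1 <= y -> w <= 0 -> k0 / 2 * (1 + w * w) <= w * w + p y * w + q y).
  { intros y w Hy Hw. apply (pert k0 (p y) (q y) c a w Hk0); auto.
    apply HMp. unfold z1 in Hy. pose proof (Rmax_l Mp Mq). lra.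
    apply HMq. unfold z1 in Hy. pose proof (Rmax_r Mp Mq). lra. }
  destruct (tU (U z1) (Upos z1)) as [MU HMU].
  set (T := Rmax MU z1 + 1).
  assert (HT : U T < U z1).
  { assert (MU < T) by (unfold T; pose proof (Rmax_l MU z1); lra).
    specialize (HMU T H). apply Rabs_def2 in HMU. lra. }
  destruct (MVT_cor2 U U1 z1 T) as [z3 [Hz3 Hz3b]].
  { unfold T; pose proof (Rmax_r MU z1); lra. }
  { intros; auto. }
  assert (U1z3 : U1 z3 < 0).
  { assert (0 < T - z1) by lra.
    destruct (Rlt_or_le (U1 z3) 0) as [h|h]. exact h. exfalso. nra. }
  set (w := fun y => U1 y / U y).
  set (w' := fun y => - (w y * w y + p y * w y + q y)).
  assert (dw : forall y, derivable_pt_lim w y (w' y)).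
  { intro y. apply dpl_val with ((U2 y * U y - U1 y * U1 y) / (U y)²).
    apply (derivable_pt_lim_div U1 U); auto. pose proof (Upos y); lra.
    unfold w', w, Rsqr. rewrite eqU. field. pose proof (Upos y); lra. }
  assert (wz3 : w z3 <= 0).
  { unfold w. pose proof (Upos z3). left. apply Rdiv_neg_pos; auto. }
  assert (stay : forall y, z3 <= y -> w y <= 0).
  { intros y Hy. eapply Rle_trans; [|exact wz3].
    apply (stay_below w w' z3 y Hy). intros; auto.
    intros x Hx Hwx. unfold w'. specialize (G x (w x) ltac:(lra) Hwx).
    assert (0 < k0 / 2 * (1 + w x * w x)) by (apply Rmult_lt_0_compat; nra). lra.
    exact wz3. }
  set (k := k0 / 2).
  set (Z := z3 + 2 * PI / k).
  assert (HPI := PI_RGT_0).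
  assert (HZ : z3 <= Z).
  { unfold Z. assert (0 < 2 * PI / k) by (apply Rdiv_lt_0_compat; unfold k; lra). lra. }
  assert (HA : atan (w Z) <= atan (w z3) + (- k) * (Z - z3)).
  { apply (upper_mvt (fun y => atan (w y)) (fun y => / (1 + w y ^ 2) * w' y)).
    exact HZ.
    intros y _. apply (derivable_pt_lim_comp w atan y (w' y) (/ (1 + w y ^ 2))).
    auto. apply derivable_pt_lim_atan.
    intros y Hy. assert (Hwy := stay y (proj1 Hy)).
    specialize (G y (w y) ltac:(lra) Hwy).
    assert (Hpos : 0 < 1 + w y ^ 2) by nra.
    unfold w'. apply Rmult_le_reg_l with (1 + w y ^ 2). exact Hpos.
    rewrite <- Rmult_assoc, Rinv_r by lra. unfold k. nra. }
  replace ((- k) * (Z - z3)) with (- (2 * PI)) in HA by (unfold Z, k; field; lra).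
  pose proof (atan_bound (w Z)). pose proof (atan_bound (w z3)). lra.
Qed.

Print Assumptions theoremC.
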